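(* Fix $a(x)=|x|^{-\alpha}$ for $x\in\mathbb{Z}_{\neq0}$ and real $\alpha>3/2$, and for $\Delta\in\mathbb{R}$ let $$\tau_{\mathrm{eff}}^{-1}(\alpha,\Delta)=\frac12\sqrt{\frac{A(\alpha)\Delta^2+2B(\alpha)\Delta+C(\alpha)}{\sum_{n\neq0}n^2a(n)^2}},$$ with $A,B,C$ as below. Let $\Delta=\Delta(\alpha)$ satisfy $c^{\alpha}\Delta(\alpha)\to k$ as $\alpha\to\infty$, for constants $c>1$ and $k\in\mathbb{R}$. Then, as $\alpha\to\infty$: (i) if $1<c<2$ and $k\neq0$, then $\tau_{\mathrm{eff}}^{-1}(\alpha,\Delta(\alpha))\big/\bigl(|\Delta(\alpha)|/\sqrt2\bigr)\to1$; (ii) if $c=2$, then $2^{\alpha}\tau_{\mathrm{eff}}^{-1}(\alpha,\Delta(\alpha))\to\sqrt{\bigl((k-3)^2+1\bigr)/2}$, equivalently $\tau_{\mathrm{eff}}^{-1}\sim\sqrt{(\Delta^2-6\cdot2^{-\alpha}\Delta+10\cdot4^{-\alpha})/2}$; (iii) if $c>2$, then $2^{\alpha}\tau_{\mathrm{eff}}^{-1}(\alpha,\Delta(\alpha))\to\sqrt5$. In particular $2^{\alpha}\tau_{\mathrm{eff}}^{-1}(\alpha,\Delta^*(\alpha))\to1/\sqrt2$, where $\Delta^*(\alpha)=-B(\alpha)/A(\alpha)$, while $2^{\alpha}\tau_{\mathrm{eff}}^{-1}(\alpha,e^{2-\alpha})\to\sqrt5$.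
   Context: Here, with $a(x)=|x|^{-\alpha}$ and all sums over $u,v\in\mathbb{Z}_{\neq0}$ with $u+v\neq0$: $A=\sum(u+v)^2a(u+v)^2(a(u)-a(v))^2$, $B=\sum(u^2-v^2)a(u)a(v)a(u+v)(a(u)-a(v))$, $C=\sum(u-v)^2a(u)^2a(v)^2$. The quantity $\tau_{\mathrm{eff}}^{-1}$ is the estimated decay rate of the spin current of the XXZ chain with couplings $a(r)$ and $b(r)=\Delta a(r)$. *)

(* Defs.v *)
From HB Require Import structures.
From mathcomp Require Import all_boot all_order all_algebra.
From mathcomp Require Import all_classical all_reals all_analysis.
Set Implicit Arguments. Unset Strict Implicit. Unset Printing Implicit Defensive.
Import Order.TTheory GRing.Theory Num.Theory.
Import numFieldNormedType.Exports.
Local Open Scope ring_scope.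

Definition zrange (N : nat) : seq int :=
  [seq (i%:Z - N%:Z) | i <- iota 0 (2 * N + 1)].

Definition acoef {R : realType} (alpha : R) (x : int) : R :=
  ((`|x|%N)%:R : R) `^ (- alpha).

Definition dpsum {R : realType} (f : int -> int -> R) (N : nat) : R :=
  \sum_(u <- zrange N)
    \sum_(v <- zrange N | [&& u != 0, v != 0 & u + v != 0]) f u v.

(* the double series, as the limit of its square partial sums *)
Definition dsum {R : realType} (f : int -> int -> R) : R := limn (dpsum f).

Definition ssum {R : realType} (f : int -> R) : R :=
  limn (fun N => \sum_(n <- zrange N | n != 0) f n).

Definition Acoef {R : realType} (alpha : R) : R :=
  let a := acoef alpha in
  dsum (fun u v => ((u + v)%:~R) ^+ 2 * (a (u + v)) ^+ 2 * (a u - a v) ^+ 2).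

Definition Bcoef {R : realType} (alpha : R) : R :=
  let a := acoef alpha in
  dsum (fun u v => ((u%:~R) ^+ 2 - (v%:~R) ^+ 2) * a u * a v * a (u + v) * (a u - a v)).

Definition Ccoef {R : realType} (alpha : R) : R :=
  let a := acoef alpha in
  dsum (fun u v => ((u - v)%:~R) ^+ 2 * (a u) ^+ 2 * (a v) ^+ 2).

Definition tau_eff_inv {R : realType} (alpha Delta : R) : R :=
  2^-1 * Num.sqrt ((Acoef alpha * Delta ^+ 2 + 2 * Bcoef alpha * Delta + Ccoef alpha)
                   / ssum (fun n => (n%:~R) ^+ 2 * (acoef alpha n) ^+ 2)).

(* Main.v *)
Require Import Defs.
From HB Require Import structures.
From mathcomp Require Import all_boot all_order all_algebra.
From mathcomp Require Import all_classical all_reals all_analysis.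
From mathcomp Require Import ring lra zify.
Import Order.TTheory GRing.Theory Num.Theory.
Import numFieldNormedType.Exports.
Local Open Scope ring_scope.
Local Open Scope classical_set_scope.
Lemma zrange2 : zrange 2 = [:: -2; -1; 0; 1; 2]%R.
Proof. by []. Qed.

Section Sums.
Variable R : realType.

Lemma zrangeS N : zrange N.+1 = (- (N.+1)%:Z) :: rcons (zrange N) (N.+1)%:Z.
Proof.
rewrite /zrange.
have -> : (2 * N.+1 + 1 = 1 + (2 * N + 1) + 1)%N by lia.
rewrite iotaD iotaD map_cat map_cat /= cats1; congr (_ :: _).
  by rewrite sub0r.
congr rcons; last by lia.
rewrite (iotaDl 1 0) -map_comp; apply: eq_map => i /=; lia.
Qed.

Lemma big_zrangeS (F : int -> R) N :
  \sum_(u <- zrange N.+1) F u = F (- (N.+1)%:Z) + \sum_(u <- zrange N) F u + F (N.+1)%:Z.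
Proof. by rewrite zrangeS big_cons big_rcons /= addrA. Qed.

Definition phi (n : int) : R := ((`|n|%N%:R) ^+ 2)^-1.

Lemma phi_ge0 n : 0 <= phi n.
Proof. by rewrite /phi invr_ge0 exprn_ge0. Qed.

Lemma sum_phi_aux N : \sum_(u <- zrange N) phi u <= 4 - 4 / (N.+1%:R).
Proof.
elim: N => [|N IH].
  by rewrite /zrange /= big_cons big_nil /phi /= expr0n /= invr0 addr0 divr1 subrr.
rewrite big_zrangeS.
have -> : phi (- (N.+1)%:Z) = (N.+1%:R ^+ 2)^-1 by rewrite /phi abszN absz_nat.
have -> : phi ((N.+1)%:Z) = (N.+1%:R ^+ 2)^-1 by rewrite /phi absz_nat.
move: IH; set n : R := N.+1%:R => IH.
have n1 : 1 <= n by rewrite /n ler1n.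
have -> : (N.+2)%:R = n + 1 :> R by rewrite /n -natr1.
have key : ((n ^+ 2)^-1) + (n ^+ 2)^-1 <= 4 / n - 4 / (n + 1).
  rewrite -subr_ge0.
  have -> : 4 / n - 4 / (n + 1) - (((n ^+ 2)^-1) + (n ^+ 2)^-1) = (2 * n - 2) / (n ^+ 2 * (n + 1)).
    by field; apply/andP; split; lra.
  apply: divr_ge0; first lra.
  by apply: mulr_ge0; [exact: exprn_ge0|lra].
move: key IH; set a := n ^- 2; set b := 4 / n; set c := 4 / (n + 1).
set S := \sum_(_ <- _) _; lra.
Qed.

Lemma sum_phi N : \sum_(u <- zrange N) phi u <= 4.
Proof.
apply: le_trans (sum_phi_aux N) _; rewrite lerBlDr lerDl.
by apply: divr_ge0 => //; rewrite ler0n.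
Qed.

End Sums.

Section DSums.
Variable R : realType.

Definition inbox (u : int) := (`|u| <= 2)%N.

Lemma inbox_zrange2 u : u \in zrange 2 -> inbox u.
Proof. by rewrite zrange2 !inE => /or4P [| | |/orP[|]] /eqP -> . Qed.

Lemma box_sum (G : int -> R) N : (forall n, ~~ inbox n -> G n = 0) -> (2 <= N)%N ->
  \sum_(u <- zrange N) G u = \sum_(u <- zrange 2) G u.
Proof.
move=> HG; elim: N => [//|N IH].
rewrite leq_eqVlt => /orP[/eqP <- //|]; rewrite ltnS => HN.
rewrite big_zrangeS IH // !HG ?addr0 ?add0r //.
  by rewrite /inbox absz_nat -ltnNge ltnS.
by rewrite /inbox abszN absz_nat -ltnNge ltnS.
Qed.

Lemma dpsum_le (g h : int -> int -> R) N :
  (forall u v, [&& u != 0, v != 0 & u + v != 0] -> g u v <= h u v) ->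
  dpsum g N <= dpsum h N.
Proof. by move=> H; apply: ler_sum => u _; apply: ler_sum => v; apply: H. Qed.

Lemma dpsumD (g h : int -> int -> R) N :
  dpsum (fun u v => g u v + h u v) N = dpsum g N + dpsum h N.
Proof. by rewrite /dpsum -big_split; apply: eq_bigr => u _; rewrite -big_split. Qed.

Lemma dpsumB (g h : int -> int -> R) N :
  dpsum (fun u v => g u v - h u v) N = dpsum g N - dpsum h N.
Proof. by rewrite /dpsum -sumrB; apply: eq_bigr => u _; rewrite -sumrB. Qed.

Lemma dpsum_nondec (g : int -> int -> R) :
  (forall u v, [&& u != 0, v != 0 & u + v != 0] -> 0 <= g u v) ->
  nondecreasing_seq (dpsum g).
Proof.
move=> H; apply/nondecreasing_seqP => N; rewrite /dpsum big_zrangeS.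
have Hin : forall u M, 0 <= \sum_(v <- zrange M | [&& u != 0, v != 0 & u + v != 0]) g u v.
  by move=> u M; apply: sumr_ge0 => v; apply: H.
rewrite -addrA ler_wpDl ?Hin // ler_wpDr ?Hin //.
apply: ler_sum => u _; rewrite [leRHS]big_mkcond [leLHS]big_mkcond big_zrangeS /=.
rewrite -addrA ler_wpDl ?ler_wpDr //; by case: ifP => // ?; apply: H.
Qed.

Lemma dpsum_phi (E : R) N : 0 <= E ->
  dpsum (fun u v => E * (phi R u * phi R v)) N <= 16 * E.
Proof.
move=> E0; rewrite /dpsum.
apply: (@le_trans _ _ (\sum_(u <- zrange N) \sum_(v <- zrange N) E * (phi R u * phi R v))).
  apply: ler_sum => u _; rewrite big_mkcond; apply: ler_sum => v _.
  by case: ifP => // _; rewrite mulr_ge0 // mulr_ge0 // phi_ge0.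
have -> : \sum_(u <- zrange N) \sum_(v <- zrange N) E * (phi R u * phi R v) =
    E * ((\sum_(u <- zrange N) phi R u) * (\sum_(u <- zrange N) phi R u)).
  rewrite mulr_suml mulr_sumr; apply: eq_bigr => u _.
  by rewrite mulr_sumr mulr_sumr; apply: eq_bigr => v _.
rewrite mulrC ler_wpM2r //.
have h0 : 0 <= \sum_(u <- zrange N) phi R u by apply: sumr_ge0 => u _; exact: phi_ge0.
have h4 := sum_phi R N.
have -> : (16 : R) = 4 * 4 by rewrite -natrM.
by apply: ler_pM.
Qed.

Lemma dsum_tail (f : int -> int -> R) (E : R) : 0 <= E ->
  (forall u v, [&& u != 0, v != 0 & u + v != 0] -> ~~ (inbox u && inbox v) ->
     `|f u v| <= E * (phi R u * phi R v)) ->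
  `|dsum f - dpsum f 2| <= 16 * E.
Proof.
move=> E0 Hf.
pose ft u v := if inbox u && inbox v then 0 else f u v.
pose fb u v := if inbox u && inbox v then f u v else 0.
pose h u v := E * (phi R u * phi R v).
have h0 : forall u v, 0 <= h u v by move=> u v; rewrite mulr_ge0 // mulr_ge0 // phi_ge0.
have Hft : forall u v, [&& u != 0, v != 0 & u + v != 0] -> `|ft u v| <= h u v.
  by move=> u v a; rewrite /ft; case: ifPn => [_|/(Hf u v a)//]; rewrite normr0.
have H1 : forall N, dpsum f N = dpsum fb N + dpsum ft N.
  move=> N; rewrite -dpsumD; apply: eq_bigr => u _; apply: eq_bigr => v _.
  by rewrite /fb /ft; case: ifP; rewrite ?addr0 ?add0r.
have H2 : forall N, (2 <= N)%N -> dpsum fb N = dpsum f 2.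
  move=> N HN; rewrite /dpsum (box_sum _ _ _ HN); last first.
    move=> n Hn; rewrite big1 // => v _; by rewrite /fb (negbTE Hn).
  apply: eq_big_seq => u /inbox_zrange2 Hu.
  rewrite big_mkcond (box_sum _ _ _ HN); last first.
    move=> n Hn; by rewrite /fb (negbTE Hn) andbF; case: ifP.
  rewrite [RHS]big_mkcond; apply: eq_big_seq => v /inbox_zrange2 Hv.
  by rewrite /fb Hu Hv.
pose g1 u v := ft u v + h u v.
have g1ge0 : forall u v, [&& u != 0, v != 0 & u + v != 0] -> 0 <= g1 u v.
  move=> u v a; rewrite /g1 -lerBlDr sub0r; have := Hft u v a.
  by rewrite ler_norml => /andP[].
have Hb : forall N, dpsum h N <= 16 * E by move=> N; exact: dpsum_phi.
have cvh : cvgn (dpsum h).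
  apply/cvg_ex; eexists; apply: nondecreasing_cvgn.
    by apply: dpsum_nondec => u v _; exact: h0.
  by exists (16 * E) => _ [N _ <-]; exact: Hb.
have cvg1 : cvgn (dpsum g1).
  apply/cvg_ex; eexists; apply: nondecreasing_cvgn; first exact: dpsum_nondec.
  exists (16 * E + 16 * E) => _ [N _ <-]; rewrite /g1 dpsumD lerD //.
  apply: le_trans (Hb N); apply: dpsum_le => u v a.
  by apply: le_trans (Hft u v a); exact: ler_norm.
have eft : forall N, dpsum ft N = dpsum g1 N - dpsum h N.
  by move=> N; rewrite -dpsumB; apply: eq_bigr => u _; apply: eq_bigr => v _; rewrite /g1 addrK.
have cvt : cvgn (dpsum ft).
  have -> : dpsum ft = (fun N => dpsum g1 N - dpsum h N) by apply/funext => N; exact: eft.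
  exact: is_cvgB.
have Bt : forall N, `|dpsum ft N| <= 16 * E.
  move=> N; apply: le_trans (Hb N); apply: le_trans (ler_norm_sum _ _ _) _.
  apply: ler_sum => u _; apply: le_trans (ler_norm_sum _ _ _) _.
  by apply: ler_sum => v a; exact: Hft.
set l := limn (dpsum ft).
have lb : `|l| <= 16 * E.
  rewrite ler_norml; apply/andP; split.
    apply: limr_ge => //; near=> N; have := Bt N; by rewrite ler_norml => /andP[].
  apply: limr_le => //; near=> N; have := Bt N; by rewrite ler_norml => /andP[].
have cf : dpsum f @ \oo --> dpsum f 2 + l.
  have Hn : \forall N \near \oo, (fun N => dpsum f 2 + dpsum ft N) N = dpsum f N.
    near=> N; rewrite (H1 N) (H2 N) //; near: N; by exists 2%N.
  apply: cvg_trans (near_eq_cvg Hn) _.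
  by apply: cvgD; [exact: cvg_cst|exact: cvt].
rewrite /dsum (cvg_lim _ cf) // addrC addKr //.
Unshelve. all: end_near.
Qed.

End DSums.

Section SSums.
Variable R : realType.

Definition spsum (g : int -> R) N := \sum_(n <- zrange N | n != 0) g n.

Lemma spsum_nondec (g : int -> R) : (forall n, n != 0 -> 0 <= g n) ->
  nondecreasing_seq (spsum g).
Proof.
move=> H; apply/nondecreasing_seqP => N; rewrite /spsum [leRHS]big_mkcond [leLHS]big_mkcond.
rewrite big_zrangeS -addrA ler_wpDl ?ler_wpDr //; by apply: H.
Qed.

Lemma ssum_tail (f : int -> R) (E : R) : 0 <= E ->
  (forall n, n != 0 -> ~~ inbox n -> `|f n| <= E * phi R n) ->
  `|ssum f - \sum_(n <- zrange 2 | n != 0) f n| <= 4 * E.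
Proof.
move=> E0 Hf.
pose ft n := if inbox n then 0 else f n.
pose fb n := if inbox n then f n else 0.
pose h n := E * phi R n.
have h0 : forall n, 0 <= h n by move=> n; rewrite mulr_ge0 // phi_ge0.
have Hft : forall n, n != 0 -> `|ft n| <= h n.
  by move=> n a; rewrite /ft; case: ifPn => [_|/(Hf n a)//]; rewrite normr0.
have H1 : forall N, spsum f N = spsum fb N + spsum ft N.
  move=> N; rewrite /spsum -big_split; apply: eq_bigr => n _.
  by rewrite /fb /ft; case: ifP; rewrite /= ?addr0 ?add0r.
have H2 : forall N, (2 <= N)%N -> spsum fb N = spsum f 2.
  move=> N HN; rewrite /spsum big_mkcond (box_sum _ _ _ _ HN); last first.
    by move=> n Hn; rewrite /fb (negbTE Hn); case: ifP.
  rewrite [RHS]big_mkcond; apply: eq_big_seq => v /inbox_zrange2 Hv.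
  by rewrite /fb Hv.
have Hb : forall N, spsum h N <= 4 * E.
  move=> N; rewrite /spsum -mulr_sumr mulrC ler_wpM2r //.
  apply: le_trans (sum_phi R N); rewrite big_mkcond; apply: ler_sum => n _.
  by case: ifP => // _; exact: phi_ge0.
pose g1 n := ft n + h n.
have g1ge0 : forall n, n != 0 -> 0 <= g1 n.
  move=> n a; rewrite /g1 -lerBlDr sub0r; have := Hft n a.
  by rewrite ler_norml => /andP[].
have cvh : cvgn (spsum h).
  apply/cvg_ex; eexists; apply: nondecreasing_cvgn.
    by apply: spsum_nondec => n _; exact: h0.
  by exists (4 * E) => _ [N _ <-]; exact: Hb.
have cvg1 : cvgn (spsum g1).
  apply/cvg_ex; eexists; apply: nondecreasing_cvgn; first exact: spsum_nondec.
  exists (4 * E + 4 * E) => _ [N _ <-]; rewrite /g1 /spsum big_split /=; apply: lerD; last exact: Hb.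
  apply: le_trans (Hb N); apply: ler_sum => n a.
  by apply: le_trans (Hft n a); exact: ler_norm.
have eft : forall N, spsum ft N = spsum g1 N - spsum h N.
  by move=> N; rewrite /spsum -sumrB; apply: eq_bigr => n _; rewrite /g1 addrK.
have cvt : cvgn (spsum ft).
  have -> : spsum ft = (fun N => spsum g1 N - spsum h N) by apply/funext => N; exact: eft.
  exact: is_cvgB.
have Bt : forall N, `|spsum ft N| <= 4 * E.
  move=> N; apply: le_trans (Hb N); apply: le_trans (ler_norm_sum _ _ _) _.
  by apply: ler_sum => n a; exact: Hft.
set l := limn (spsum ft).
have lb : `|l| <= 4 * E.
  rewrite ler_norml; apply/andP; split.
    apply: limr_ge => //; near=> N; have := Bt N; by rewrite ler_norml => /andP[].
  apply: limr_le => //; near=> N; have := Bt N; by rewrite ler_norml => /andP[].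
have cf : spsum f @ \oo --> spsum f 2 + l.
  have Hn : \forall N \near \oo, (fun N => spsum f 2 + spsum ft N) N = spsum f N.
    near=> N; rewrite (H1 N) (H2 N) //; near: N; by exists 2%N.
  apply: cvg_trans (near_eq_cvg Hn) _.
  by apply: cvgD; [exact: cvg_cst|exact: cvt].
rewrite /ssum -/(spsum f) (cvg_lim _ cf) // /spsum addrC addKr //.
Unshelve. all: end_near.
Qed.

End SSums.

Lemma dpsum2 (R : realType) (f : int -> int -> R) : dpsum f 2 =
  f (-2) (-2) + (f (-2) (-1) + (f (-2) 1 + 0)) +
  (f (-1) (-2) + (f (-1) (-1) + (f (-1) 2 + 0)) +
   (0 +
    (f 1 (-2) + (f 1 1 + (f 1 2 + 0)) +
     (f 2 (-1) + (f 2 1 + (f 2 2 + 0)) + 0)))).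
Proof. by rewrite /dpsum zrange2 !big_cons !big_nil /=. Qed.

Section Box.
Variable R : realType.
Variable a : R.
Lemma acoefm1 : acoef a (-1) = 1. Proof. by rewrite /acoef /= powR1. Qed.
Lemma acoef1 : acoef a 1 = 1. Proof. by rewrite /acoef /= powR1. Qed.
Lemma acoefm2 : acoef a (-2) = acoef a 2. Proof. by []. Qed.
Lemma acoefm3 : acoef a (-3) = acoef a 3. Proof. by []. Qed.
Lemma acoefm4 : acoef a (-4) = acoef a 4. Proof. by []. Qed.
Definition intE := (erefl : (-2 - 2 : int) = -4, erefl : (-2 - 1 : int) = -3,
  erefl : (-2 + 1 : int) = -1, erefl : (-1 - 2 : int) = -3, erefl : (-1 - 1 : int) = -2,
  erefl : (-1 + 2 : int) = 1, erefl : (1 - 2 : int) = -1, erefl : (1 + 1 : int) = 2,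
  erefl : (1 + 2 : int) = 3, erefl : (2 - 1 : int) = 1, erefl : (2 + 1 : int) = 3,
  erefl : (2 + 2 : int) = 4, erefl : (1 - 1 : int) = 0, erefl : (-1 + 1 : int) = 0,
  erefl : (-2 + 2 : int) = 0, erefl : (2 - 2 : int) = 0).
Lemma castE1 : ((-1 : int)%:~R : R) = -1. Proof. by rewrite mulrNz. Qed.
Lemma castE2 : ((-2 : int)%:~R : R) = -2. Proof. by rewrite mulrNz. Qed.
Lemma castE3 : ((-3 : int)%:~R : R) = -3. Proof. by rewrite mulrNz. Qed.
Lemma castE4 : ((-4 : int)%:~R : R) = -4. Proof. by rewrite mulrNz. Qed.
Definition castE := (castE1, castE2, castE3, castE4, acoefm1, acoef1, acoefm2, acoefm3, acoefm4).

Lemma boxA : dpsum (fun u v => ((u + v)%:~R) ^+ 2 * (acoef a (u + v)) ^+ 2 * (acoef a u - acoef a v) ^+ 2) 2 = 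
  4 * (1 - acoef a 2) ^+ 2 + 36 * (acoef a 3) ^+ 2 * (1 - acoef a 2) ^+ 2.
Proof.
rewrite dpsum2 !intE !castE.
rewrite !pmulrn; ring.
Qed.


Lemma boxB : dpsum (fun u v => ((u%:~R) ^+ 2 - (v%:~R) ^+ 2) * acoef a u * acoef a v * acoef a (u + v) * (acoef a u - acoef a v)) 2 =
  - 12 * acoef a 2 * (1 - acoef a 2) * (1 + acoef a 3).
Proof. rewrite dpsum2 !intE !castE !pmulrn; ring. Qed.

Lemma boxC : dpsum (fun u v => ((u - v)%:~R) ^+ 2 * (acoef a u) ^+ 2 * (acoef a v) ^+ 2) 2 =
  40 * acoef a 2 ^+ 2.
Proof. rewrite dpsum2 !intE !castE !pmulrn; ring. Qed.

Lemma boxS : \sum_(n <- zrange 2 | n != 0) (n%:~R) ^+ 2 * (acoef a n) ^+ 2 = 2 + 8 * acoef a 2 ^+ 2.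
Proof. rewrite zrange2 !big_cons big_nil /= !castE !pmulrn; ring. Qed.
End Box.

Section Point.
Variable R : realType.
Implicit Types (u v : int) (al : R).

Definition P u : R := (`|u|%N)%:R.

Lemma P_ge1 u : u != 0 -> 1 <= P u.
Proof. by move=> u0; rewrite /P ler1n absz_gt0. Qed.

Lemma P_ge3 u : ~~ inbox u -> 3 <= P u.
Proof.
move=> H; have H3 : (3 <= `|u|)%N by rewrite ltnNge.
by rewrite /P ler_nat.
Qed.

Lemma P_norm u : P u = `|(u%:~R : R)|.
Proof. by rewrite /P natr_absz intr_norm. Qed.

Lemma P_sqr u : P u ^+ 2 = (u%:~R : R) ^+ 2.
Proof. by rewrite P_norm real_normK // num_real. Qed.

Lemma phiE u : phi R u = (P u ^+ 2)^-1.
Proof. by []. Qed.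

Lemma powR_sqr (x t : R) : 0 <= x -> (x `^ t) ^+ 2 = (x ^+ 2) `^ t.
Proof. by move=> x0; rewrite !expr2 powRM. Qed.

Lemma powtail (W W0 al : R) (b : nat) : 0 < W0 -> W0 <= W -> b%:R <= al ->
  W `^ (- al) <= (W ^+ b)^-1 * W0 `^ (- (al - b%:R)).
Proof.
move=> W00 WW0 bal.
have W0' : 0 < W by apply: lt_le_trans WW0.
have -> : - al = - (b%:R) + - (al - b%:R) by ring.
rewrite powRD; last by apply/implyP => _; rewrite gt_eqF.
rewrite powR_invn; last exact: ltW.
apply: ler_wpM2l; first by rewrite invr_ge0 exprn_ge0 // ltW.
rewrite !powRN lef_pV2 ?posrE ?powR_gt0 //.
apply: ge0_ler_powR => //; first by rewrite subr_ge0.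
  by rewrite nnegrE ltW.
by rewrite nnegrE ltW.
Qed.

Lemma gen_bound (X W W0 al K p q : R) (b : nat) : 0 <= X -> 0 < W0 -> W0 <= W ->
  b%:R <= al -> 1 <= p -> 1 <= q -> X * (p ^+ 2 * q ^+ 2) <= K * W ^+ b ->
  X * W `^ (- al) <= (K * W0 `^ (- (al - b%:R))) * ((p ^+ 2)^-1 * (q ^+ 2)^-1).
Proof.
move=> X0 W00 WW0 bal p1 q1 HX.
have W0' : 0 < W by apply: lt_le_trans WW0.
set T := W0 `^ _.
have T0 : 0 <= T by exact: powR_ge0.
apply: le_trans (ler_wpM2l X0 (@powtail W W0 al b W00 WW0 bal)) _.
have Wb : W ^+ b != 0 by rewrite expf_neq0 // gt_eqF.
have p0 : p != 0 by rewrite gt_eqF // (lt_le_trans _ p1).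
have q0 : q != 0 by rewrite gt_eqF // (lt_le_trans _ q1).
set Z := (W ^+ b)^-1 * T * ((p ^+ 2)^-1 * (q ^+ 2)^-1).
have -> : X * ((W ^+ b)^-1 * T) = (X * (p ^+ 2 * q ^+ 2)) * Z.
  by rewrite /Z; field; rewrite Wb p0 q0.
have -> : K * T * ((p ^+ 2)^-1 * (q ^+ 2)^-1) = (K * W ^+ b) * Z.
  by rewrite /Z; field; rewrite Wb p0 q0.
have p0' : 0 <= p by exact: (le_trans ler01 p1).
have q0' : 0 <= q by exact: (le_trans ler01 q1).
apply: ler_wpM2r => //; rewrite /Z !mulr_ge0 // invr_ge0 exprn_ge0 //; exact: ltW.
Qed.

End Point.

Section Tails.
Variable R : realType.
Implicit Types (u v : int) (al : R).

Lemma acoefP al u : acoef al u = P R u `^ (- al).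
Proof. by []. Qed.

Lemma P0 u : 0 <= P R u.
Proof. by rewrite /P ler0n. Qed.

Lemma acoef_ge0 al u : 0 <= acoef al u.
Proof. exact: powR_ge0. Qed.

Lemma acoef_anti al u v : 0 <= al -> u != 0 -> (`|u| <= `|v|)%N -> acoef al v <= acoef al u.
Proof.
move=> a0 u0 h.
have pu : 0 < P R u := lt_le_trans ltr01 (P_ge1 R _ u0).
have puv : P R u <= P R v by rewrite /P ler_nat.
have pv : 0 < P R v := lt_le_trans pu puv.
rewrite !acoefP !powRN lef_pV2 ?posrE ?powR_gt0 //.
by apply: ge0_ler_powR => //; rewrite nnegrE ltW.
Qed.

Lemma Padd u v : P R (u + v) = `|(u%:~R : R) + v%:~R|.
Proof. by rewrite P_norm intrD. Qed.

Lemma tri1 u v : P R v <= P R u + P R (u + v).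
Proof.
rewrite !P_norm intrD.
have := ler_normB (u%:~R + v%:~R) (u%:~R : R).
have -> : (u%:~R + v%:~R) - u%:~R = v%:~R :> R by ring.
lra.
Qed.

Lemma rp2 (p q r : R) : 1 <= p -> 1 <= r -> 3 <= q -> q <= p + r -> 2 <= r * p.
Proof.
move=> p1 r1 q3 hq; case: (lerP 2 p) => hp.
  by apply: le_trans hp _; rewrite ler_peMl //; lra.
nra.
Qed.

Lemma tailC al u v : 2%:R <= al -> [&& u != 0, v != 0 & u + v != 0] -> ~~ (inbox u && inbox v) ->
  `|((u - v)%:~R) ^+ 2 * (acoef al u) ^+ 2 * (acoef al v) ^+ 2| <=
  (4 * 9 `^ (- (al - 2%:R))) * (phi R u * phi R v).
Proof.
move=> Ha /and3P[u0 v0 s0] Hnb.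
have p1 := P_ge1 R _ u0; have q1 := P_ge1 R _ v0.
have ht : `|(u - v)%:~R : R| <= P R u + P R v by rewrite intrB !P_norm ler_normB.
set p := P R u in p1 ht *; set q := P R v in q1 ht *.
have Hpq : 3 <= p \/ 3 <= q.
  by move: Hnb; rewrite negb_and => /orP[/(P_ge3 R _)|/(P_ge3 R _)]; [left|right].
rewrite !phiE -/p -/q !acoefP -/p -/q -mulrA !powR_sqr ?P0 // -powRM ?exprn_ge0 ?P0 //.
rewrite ger0_norm; last by rewrite mulr_ge0 ?sqr_ge0 ?powR_ge0.
clearbody p q.
apply: gen_bound => //.
- exact: sqr_ge0.
- have pq : 3 <= p * q by case: Hpq => h; nra.
  rewrite -exprMn; nra.
have X0 : 0 <= `|(u - v)%:~R : R| by [].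
rewrite -real_normK ?num_real //.
set t := `|_| in ht X0 *.
clearbody t.
rewrite -exprMn; set m := p * q.
have m1 : 1 <= m by rewrite /m; nra.
have tm : t <= 2 * m by rewrite /m; nra.
have h1 : t ^+ 2 <= (2 * m) ^+ 2 by rewrite lerXn2r // nnegrE; nra.
have -> : 4 * (m ^+ 2) ^+ 2 = ((2 * m) ^+ 2) * m ^+ 2 by ring.
by apply: ler_wpM2r => //; exact: sqr_ge0.
Qed.


Lemma tailS al n : 2%:R <= al -> n != 0 -> ~~ inbox n ->
  `|(n%:~R) ^+ 2 * (acoef al n) ^+ 2| <= (9 `^ (- (al - 2%:R))) * phi R n.
Proof.
move=> Ha n0 Hn.
have p3 := P_ge3 R _ Hn; have p1 := P_ge1 R _ n0.
rewrite phiE -P_sqr acoefP powR_sqr ?P0 //.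
set p := P R n in p1 p3 *; clearbody p.
rewrite ger0_norm; last by rewrite mulr_ge0 ?sqr_ge0 ?powR_ge0.
have := @gen_bound R (p ^+ 2) (p ^+ 2) 9 al 1 p 1 2 (sqr_ge0 _) ltac:(by []) ltac:(by nra) Ha p1 (lexx _) ltac:(by rewrite expr1n !mulr1 mul1r expr2).
by rewrite expr1n invr1 !mulr1 mul1r.
Qed.

Lemma tailA al : 4%:R <= al -> forall u v, [&& u != 0, v != 0 & u + v != 0] -> ~~ (inbox u && inbox v) ->
  `|((u + v)%:~R) ^+ 2 * (acoef al (u + v)) ^+ 2 * (acoef al u - acoef al v) ^+ 2| <=
  (4 * 4 `^ (- (al - 4%:R))) * (phi R u * phi R v).
Proof.
move=> Ha.
have a0 : 0 <= al by apply: le_trans Ha; rewrite ler0n.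
suff H : forall u v, (`|u| <= `|v|)%N -> [&& u != 0, v != 0 & u + v != 0] -> ~~ (inbox u && inbox v) ->
  `|((u + v)%:~R) ^+ 2 * (acoef al (u + v)) ^+ 2 * (acoef al u - acoef al v) ^+ 2| <=
  (4 * 4 `^ (- (al - 4%:R))) * (phi R u * phi R v).
  move=> u v; case: (leqP `|u| `|v|) => h; first exact: H.
  move=> ad tl.
  have -> : ((u + v)%:~R) ^+ 2 * (acoef al (u + v)) ^+ 2 * (acoef al u - acoef al v) ^+ 2 =
    ((v + u)%:~R) ^+ 2 * (acoef al (v + u)) ^+ 2 * (acoef al v - acoef al u) ^+ 2 :> R.
    by rewrite [v + u]addrC; ring.
  rewrite [phi R u * _]mulrC.
  apply: H; first exact: ltnW.
    by move: ad => /and3P[? ? ?]; rewrite addrC; apply/and3P.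
  by rewrite andbC.
move=> u v le /and3P[u0 v0 s0] tl.
have p1 := P_ge1 R _ u0; have q1 := P_ge1 R _ v0; have r1 := P_ge1 R _ s0.
have pq : P R u <= P R v by rewrite /P ler_nat.
have q3 : 3 <= P R v.
  move: tl; rewrite negb_and => /orP[/(P_ge3 R _) h|/(P_ge3 R _) //].
  exact: le_trans h pq.
have tri := tri1 u v.
have avu := acoef_anti _ _ _ a0 u0 le.
have av0 := acoef_ge0 al v.
rewrite ger0_norm; last by apply: mulr_ge0; [apply: mulr_ge0|]; exact: sqr_ge0.
have step : (acoef al u - acoef al v) ^+ 2 <= (acoef al u) ^+ 2.
  by apply: lerXn2r; rewrite ?nnegrE; lra.
apply: le_trans (ler_wpM2l _ step) _; first by apply: mulr_ge0; exact: sqr_ge0.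
rewrite -P_sqr !acoefP -(mulrA (P R (u + v) ^+ 2)) !powR_sqr ?P0 // -powRM ?exprn_ge0 ?P0 // -exprMn.
rewrite !phiE.
move: p1 q1 r1 pq q3 tri; set p := P R u; set q := P R v; set r := P R (u + v).
clearbody p q r => p1 q1 r1 pq q3 tri.
have m2 : 2 <= r * p by apply: (@rp2 p q r).
apply: gen_bound => //.
- exact: sqr_ge0.
- nra.
have hq : q <= 2 * (r * p) by nra.
set m := r * p in m2 hq *.
have -> : r ^+ 2 * (p ^+ 2 * q ^+ 2) = m ^+ 2 * q ^+ 2 by rewrite /m; ring.
clearbody m.
have h1 : q ^+ 2 <= (2 * m) ^+ 2 by rewrite lerXn2r // nnegrE; nra.
have m4 : 1 <= m ^+ 4 by rewrite exprn_ege1 //; lra.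
apply: le_trans (ler_wpM2l (sqr_ge0 m) h1) _.
have -> : m ^+ 2 * (2 * m) ^+ 2 = 4 * m ^+ 4 by ring.
have -> : 4 * (m ^+ 2) ^+ 4 = 4 * (m ^+ 4 * m ^+ 4) by ring.
rewrite ler_pM2l //; rewrite ler_peMl //; lra.
Qed.

Lemma tailB al : 4%:R <= al -> forall u v, [&& u != 0, v != 0 & u + v != 0] -> ~~ (inbox u && inbox v) ->
  `|((u%:~R) ^+ 2 - (v%:~R) ^+ 2) * acoef al u * acoef al v * acoef al (u + v) * (acoef al u - acoef al v)| <=
  (2 * 4 `^ (- (al - 4%:R))) * (phi R u * phi R v).
Proof.
move=> Ha.
have a0 : 0 <= al by apply: le_trans Ha; rewrite ler0n.
suff H : forall u v, (`|u| <= `|v|)%N -> [&& u != 0, v != 0 & u + v != 0] -> ~~ (inbox u && inbox v) ->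
  `|((u%:~R) ^+ 2 - (v%:~R) ^+ 2) * acoef al u * acoef al v * acoef al (u + v) * (acoef al u - acoef al v)| <=
  (2 * 4 `^ (- (al - 4%:R))) * (phi R u * phi R v).
  move=> u v; case: (leqP `|u| `|v|) => h; first exact: H.
  move=> ad tl.
  have -> : ((u%:~R) ^+ 2 - (v%:~R) ^+ 2) * acoef al u * acoef al v * acoef al (u + v) * (acoef al u - acoef al v) =
     ((v%:~R) ^+ 2 - (u%:~R) ^+ 2) * acoef al v * acoef al u * acoef al (v + u) * (acoef al v - acoef al u) :> R.
    by rewrite [v + u]addrC; ring.
  rewrite [phi R u * _]mulrC.
  apply: H; first exact: ltnW.
    by move: ad => /and3P[? ? ?]; rewrite addrC; apply/and3P.
  by rewrite andbC.
move=> u v le /and3P[u0 v0 s0] tl.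
have p1 := P_ge1 R _ u0; have q1 := P_ge1 R _ v0; have r1 := P_ge1 R _ s0.
have pq : P R u <= P R v by rewrite /P ler_nat.
have q3 : 3 <= P R v.
  move: tl; rewrite negb_and => /orP[/(P_ge3 R _) h|/(P_ge3 R _) //].
  exact: le_trans h pq.
have tri := tri1 u v.
have avu := acoef_anti _ _ _ a0 u0 le.
have av0 := acoef_ge0 al v.
have hX : `|(u%:~R : R) ^+ 2 - (v%:~R) ^+ 2| <= (P R u + P R v) * P R (u + v).
  have -> : (u%:~R : R) ^+ 2 - (v%:~R) ^+ 2 = (u%:~R - v%:~R) * (u%:~R + v%:~R) by ring.
  rewrite normrM -Padd; apply: ler_wpM2r; first exact: P0.
  by rewrite !P_norm ler_normB.
rewrite !normrM !(ger0_norm (acoef_ge0 _ _)) (ger0_norm (_ : 0 <= acoef al u - acoef al v)); last by lra.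
have step : acoef al u - acoef al v <= acoef al u by lra.
apply: le_trans (ler_wpM2l _ step) _; first by rewrite !mulr_ge0 ?acoef_ge0.
rewrite !acoefP -!mulrA -!powRM ?mulr_ge0 ?P0 //.
rewrite !phiE.
move: p1 q1 r1 pq q3 tri hX; set p := P R u; set q := P R v; set r := P R (u + v).
set X := `|_|.
have X0 : 0 <= X by exact: normr_ge0.
clearbody p q r X => p1 q1 r1 pq q3 tri hX.
have m2 : 2 <= r * p by apply: (@rp2 p q r).
have -> : p * (q * (r * p)) = p * q * r * p by ring.
rewrite mulrA.
apply: gen_bound => //.
- have -> : p * q * r * p = (q * (r * p)) * p by ring.
  set m := r * p in m2 *; clearbody m.
  have h6 : 6 <= q * m by nra.
  nra.
have pq1 : 1 <= p * q by nra.
set A := p * q * r.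
have A1 : 1 <= A by rewrite /A; nra.
have hXA : X <= 2 * A.
  apply: le_trans hX _; rewrite /A.
  have : p + q <= 2 * (p * q) by nra.
  by move=> h; rewrite mulrA; apply: ler_wpM2r; [lra|].
have pqA : p ^+ 2 * q ^+ 2 <= A ^+ 2.
  rewrite -exprMn; apply: lerXn2r; rewrite ?nnegrE; [lra|lra|rewrite /A; nra].
apply: le_trans (ler_pM _ _ hXA pqA) _.
- exact: X0.
- by rewrite mulr_ge0 ?sqr_ge0.
have -> : 2 * A * A ^+ 2 = 2 * (A ^+ 3) by ring.
have -> : 2 * (A * p) ^+ 4 = 2 * (A ^+ 3 * (A * p ^+ 4)) by ring.
rewrite ler_pM2l // ler_peMr ?exprn_ge0 //; first lra.
have : 1 <= p ^+ 4 by rewrite exprn_ege1.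
by move=> h; rewrite -[1]mul1r ler_pM //; lra.
Qed.

End Tails.

Section Lims.
Variable R : realType.

Lemma expR_lin (k : R) : 0 < k -> expR (- (x * k)) @[x --> +oo] --> 0.
Proof.
move=> k0; apply/cvgrPdist_le => e e0; near=> x.
rewrite sub0r normrN ger0_norm; last exact: expR_ge0.
rewrite expRN -[leRHS]invrK lef_pV2 ?posrE ?expR_gt0 ?invr_gt0//.
rewrite (le_trans _ (expR_ge1Dx _))// -lerBlDl -ler_pdivrMr //.
Unshelve. end_near. Qed.

Lemma key_lim (c d b : R) : 0 < c -> c < d ->
  (c `^ x * d `^ (- (x - b))) @[x --> +oo] --> 0.
Proof.
move=> c0 cd; have d0 : 0 < d by apply: lt_trans cd.
have k0 : 0 < ln d - ln c by rewrite subr_gt0 ltr_ln.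
have e : forall x, c `^ x * d `^ (- (x - b)) = d `^ b * expR (- (x * (ln d - ln c))).
  move=> x; rewrite /powR !gt_eqF // -!expRD; congr expR; ring.
rewrite (_ : (fun x => c `^ x * d `^ (- (x - b))) = (fun x => d `^ b * expR (- (x * (ln d - ln c))))); last by apply/funext => x; exact: e.
rewrite -(mulr0 (d `^ b)); apply: cvgMl_tmp; exact: expR_lin.
Qed.

Lemma decay (d b : R) : 1 < d -> (d `^ (- (x - b))) @[x --> +oo] --> 0.
Proof.
move=> d1; have := @key_lim 1 d b ltr01 d1.
by rewrite (_ : (fun x => 1 `^ x * d `^ (- (x - b))) = (fun x => d `^ (- (x - b)))) //; apply/funext => x; rewrite powR1 mul1r.
Qed.

Lemma squeeze0 (g h : R -> R) : (\forall x \near +oo, `|g x| <= h x) ->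
  h x @[x --> +oo] --> 0 -> g x @[x --> +oo] --> 0.
Proof.
move=> Hn hh; apply/cvgrPdist_le => e e0.
move/cvgrPdist_le : hh => /(_ e e0) hh.
near=> x; rewrite sub0r normrN.
have h1 : `|g x| <= h x by near: x.
have h2 : `|0 - h x| <= e by near: x.
move: h2; rewrite sub0r normrN => h2.
by apply: le_trans h1 (le_trans (ler_norm _) h2).
Unshelve. all: end_near.
Qed.

End Lims.

Lemma ltr_nat1 {R : realType} {n : nat} : (1 < n)%N -> (1 : R) < n%:R.
Proof. by rewrite ltr1n. Qed.

Section CoefLims.
Variable R : realType.

Lemma acoef2E (x : R) : acoef x 2 = 2 `^ (- x).
Proof. by []. Qed.
Lemma acoef3E (x : R) : acoef x 3 = 3 `^ (- x).
Proof. by []. Qed.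

Lemma y_lim : acoef x 2 @[x --> +oo] --> (0 : R).
Proof.
have := @decay R 2 0 (ltr_nat1 (n:=2) isT).
by rewrite (_ : (fun x => 2 `^ (- (x - 0))) = (fun x => acoef x 2)) //; apply/funext => x; rewrite subr0.
Qed.

Lemma z_lim : acoef x 3 @[x --> +oo] --> (0 : R).
Proof.
have := @decay R 3 0 (ltr_nat1 (n:=3) isT).
by rewrite (_ : (fun x => 3 `^ (- (x - 0))) = (fun x => acoef x 3)) //; apply/funext => x; rewrite subr0.
Qed.

Lemma two_y (x : R) : 2 `^ x * acoef x 2 = 1.
Proof. by rewrite acoef2E powRN mulfV // gt_eqF // powR_gt0. Qed.

Lemma lim_split (f b : R -> R) (l : R) : b x @[x --> +oo] --> l ->
  (f x - b x) @[x --> +oo] --> 0 -> f x @[x --> +oo] --> l.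
Proof.
move=> hb hd; rewrite (_ : f = (fun x => b x + (f x - b x))); last by apply/funext => x; rewrite addrC subrK.
rewrite -[l]addr0; exact: cvgD.
Qed.

Lemma cvgX2 (f : R -> R) (a : R) : f x @[x --> +oo] --> a -> (f x ^+ 2) @[x --> +oo] --> a ^+ 2.
Proof.
move=> h; rewrite (_ : (fun x => f x ^+ 2) = (fun x => f x * f x)); last by apply/funext => x; exact: expr2.
by rewrite expr2; apply: cvgM.
Qed.

Lemma near4 : \forall x \near +oo, (4%:R : R) <= x.
Proof. by apply: nbhs_pinfty_ge; exact: num_real. Qed.

Lemma A_lim : Acoef x @[x --> +oo] --> (4 : R).
Proof.
apply: (@lim_split _ (fun x => 4 * (1 - acoef x 2) ^+ 2 + 36 * (acoef x 3) ^+ 2 * (1 - acoef x 2) ^+ 2)).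
  have hy := @y_lim; have hz := @z_lim.
  have h1 : (1 - acoef x 2) @[x --> +oo] --> (1 - 0 : R) by apply: cvgB => //; exact: cvg_cst.
  have hb : (4 * (1 - acoef x 2) ^+ 2 + 36 * (acoef x 3) ^+ 2 * (1 - acoef x 2) ^+ 2) @[x --> +oo] -->
      (4 * (1 - 0) ^+ 2 + 36 * 0 ^+ 2 * (1 - 0) ^+ 2 : R).
    apply: cvgD; first by apply: cvgMl_tmp; apply: cvgX2.
    by apply: cvgM; [apply: cvgMl_tmp; apply: cvgX2|apply: cvgX2].
  have e : (4 * (1 - 0) ^+ 2 + 36 * 0 ^+ 2 * (1 - 0) ^+ 2 : R) = 4 by ring.
  by rewrite e in hb.
apply: (@squeeze0 _ _ (fun x => 16 * (4 * 4 `^ (- (x - 4%:R))))).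
  near=> x; rewrite /Acoef /= -boxA; apply: dsum_tail.
    by rewrite mulr_ge0 // powR_ge0.
  apply: tailA; near: x; exact: near4.
rewrite -(mulr0 16); apply: cvgMl_tmp; rewrite -(mulr0 4); apply: cvgMl_tmp.
by apply: decay; rewrite ltr1n.
Unshelve. all: end_near.
Qed.


Lemma B_lim : (2 `^ x * Bcoef x) @[x --> +oo] --> (-12 : R).
Proof.
apply: (@lim_split _ (fun x => -12 * (1 - acoef x 2) * (1 + acoef x 3))).
  have hy := @y_lim; have hz := @z_lim.
  have hb : (-12 * (1 - acoef x 2) * (1 + acoef x 3)) @[x --> +oo] --> (-12 * (1 - 0) * (1 + 0) : R).
    apply: cvgM; first (apply: cvgMl_tmp; apply: cvgB => //; exact: cvg_cst).
    apply: cvgD => //; exact: cvg_cst.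
  have e : (-12 * (1 - 0) * (1 + 0) : R) = -12 by ring.
  by rewrite e in hb.
apply: (@squeeze0 _ _ (fun x => 32 * (2 `^ x * 4 `^ (- (x - 4%:R))))).
  near=> x.
  have e : 2 `^ x * Bcoef x - -12 * (1 - acoef x 2) * (1 + acoef x 3) =
    2 `^ x * (Bcoef x - (- 12 * acoef x 2 * (1 - acoef x 2) * (1 + acoef x 3))).
    rewrite [RHS]mulrBr; congr (_ - _).
    rewrite (_ : 2 `^ x * (-12 * acoef x 2 * (1 - acoef x 2) * (1 + acoef x 3)) =
      -12 * (2 `^ x * acoef x 2) * (1 - acoef x 2) * (1 + acoef x 3)); last by ring.
    by rewrite two_y mulr1.
  rewrite e normrM ger0_norm ?powR_ge0 // (_ : 32 * (2 `^ x * 4 `^ (- (x - 4%:R))) = 2 `^ x * (16 * (2 * 4 `^ (- (x - 4%:R))))); last by ring.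
  apply: ler_wpM2l; first exact: powR_ge0.
  rewrite /Bcoef /= -boxB; apply: dsum_tail.
    by rewrite mulr_ge0 // powR_ge0.
  apply: tailB; near: x; exact: near4.
rewrite -(mulr0 32); apply: cvgMl_tmp; apply: key_lim; lra.
Unshelve. all: end_near.
Qed.

Lemma near2 : \forall x \near +oo, (2%:R : R) <= x.
Proof. by apply: nbhs_pinfty_ge; exact: num_real. Qed.

Lemma C_lim : ((2 `^ x) ^+ 2 * Ccoef x) @[x --> +oo] --> (40 : R).
Proof.
apply: (@lim_split _ (fun x => 40)); first exact: cvg_cst.
apply: (@squeeze0 _ _ (fun x => 64 * (4 `^ x * 9 `^ (- (x - 2%:R))))).
  near=> x.
  have e : (2 `^ x) ^+ 2 * Ccoef x - 40 = (2 `^ x) ^+ 2 * (Ccoef x - 40 * acoef x 2 ^+ 2).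
    rewrite [RHS]mulrBr; congr (_ - _).
    rewrite (_ : (2 `^ x) ^+ 2 * (40 * acoef x 2 ^+ 2) = 40 * (2 `^ x * acoef x 2) ^+ 2); last by ring.
    by rewrite two_y expr1n mulr1.
  have e4 : (4 : R) `^ x = (2 `^ x) ^+ 2 by rewrite expr2 -powRM // (_ : (2 * 2 : R) = 4) //; ring.
  rewrite e normrM ger0_norm ?exprn_ge0 ?powR_ge0 // e4.
  rewrite (_ : 64 * ((2 `^ x) ^+ 2 * 9 `^ (- (x - 2%:R))) = (2 `^ x) ^+ 2 * (16 * (4 * 9 `^ (- (x - 2%:R))))); last by ring.
  apply: ler_wpM2l; first by rewrite exprn_ge0 // powR_ge0.
  rewrite /Ccoef /= -boxC; apply: dsum_tail.
    by rewrite mulr_ge0 // powR_ge0.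
  move=> u v; apply: tailC; near: x; exact: near2.
rewrite -(mulr0 64); apply: cvgMl_tmp; apply: key_lim; lra.
Unshelve. all: end_near.
Qed.

Lemma S_lim : ssum (fun n => (n%:~R) ^+ 2 * (acoef x n) ^+ 2) @[x --> +oo] --> (2 : R).
Proof.
apply: (@lim_split _ (fun x => 2 + 8 * acoef x 2 ^+ 2)).
  have hy := @y_lim.
  have hb : (2 + 8 * acoef x 2 ^+ 2) @[x --> +oo] --> (2 + 8 * 0 ^+ 2 : R).
    apply: cvgD; first exact: cvg_cst.
    by apply: cvgMl_tmp; apply: cvgX2.
  have e : (2 + 8 * 0 ^+ 2 : R) = 2 by ring.
  by rewrite e in hb.
apply: (@squeeze0 _ _ (fun x => 4 * 9 `^ (- (x - 2%:R)))).
  near=> x.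
  rewrite -boxS; apply: ssum_tail; first exact: powR_ge0.
  move=> n; apply: tailS; near: x; exact: near2.
rewrite -(mulr0 4); apply: cvgMl_tmp; apply: decay; lra.
Unshelve. all: end_near.
Qed.

End CoefLims.

Section Final.
Variable R : realType.

Definition Sx (x : R) := ssum (fun n => (n%:~R) ^+ 2 * (acoef x n) ^+ 2).

Lemma sqrt4 : Num.sqrt (4 : R) = 2.
Proof. by rewrite (_ : (4 : R) = 2 ^+ 2); [rewrite sqrtr_sqr ger0_norm|rewrite expr2; ring]. Qed.

Lemma tau_lim2 (Delta : R -> R) (k : R) :
  (2 `^ x * Delta x) @[x --> +oo] --> k ->
  (2 `^ x * tau_eff_inv x (Delta x)) @[x --> +oo] --> Num.sqrt (((k - 3) ^+ 2 + 1) / 2).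
Proof.
move=> hD.
set D := fun x => 2 `^ x * Delta x.
pose G x := (Acoef x * D x ^+ 2 + 2 * (2 `^ x * Bcoef x) * D x + (2 `^ x) ^+ 2 * Ccoef x) / Sx x.
have e : (fun x => 2 `^ x * tau_eff_inv x (Delta x)) = (fun x => 2^-1 * Num.sqrt (G x)).
  apply/funext => x; rewrite /tau_eff_inv mulrCA; congr (_ * _).
  have t0 : 0 <= (2 : R) `^ x by exact: powR_ge0.
  rewrite -{1}(ger0_norm t0) -sqrtr_sqr -sqrtrM ?sqr_ge0 //; congr Num.sqrt.
  by rewrite /G /D /Sx; ring.
rewrite e.
have hG : G x @[x --> +oo] --> ((4 * k ^+ 2 + 2 * (-12) * k + 40) / 2 : R).
  apply: cvgM; last by apply: cvgV; [rewrite pnatr_eq0|exact: S_lim].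
  apply: cvgD; first apply: cvgD.
  - by apply: cvgM; [exact: A_lim|exact: cvgX2].
  - by apply: cvgM; [apply: cvgMl_tmp; exact: B_lim|exact: hD].
  - exact: C_lim.
have <- : 2^-1 * Num.sqrt ((4 * k ^+ 2 + 2 * (-12) * k + 40) / 2) = Num.sqrt (((k - 3) ^+ 2 + 1) / 2).
  rewrite (_ : (4 * k ^+ 2 + 2 * (-12) * k + 40) / 2 = 4 * (((k - 3) ^+ 2 + 1) / 2)); last by field.
  by rewrite sqrtrM // sqrt4 mulrA mulVf // mul1r.
apply: cvgMl_tmp.
exact: (continuous_cvg _ (@sqrt_continuous R _) hG).
Qed.


Lemma sqrt_div_abs (Y d : R) : Num.sqrt Y * (Num.sqrt 2 / `|d|) = Num.sqrt (2 * Y / d ^+ 2).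
Proof.
case: (lerP 0 Y) => hY.
  rewrite -sqrtr_sqr -sqrtrV ?sqr_ge0 // -sqrtrM // -sqrtrM //.
  by congr Num.sqrt; ring.
rewrite ler0_sqrtr ?mul0r; last exact: ltW.
rewrite ler0_sqrtr //; apply: mulr_le0_ge0; last by rewrite invr_ge0 sqr_ge0.
rewrite pmulr_rle0 //; exact: ltW.
Qed.

Lemma part3 (c k : R) (Delta : R -> R) : 2 < c ->
  (c `^ x * Delta x) @[x --> +oo] --> k ->
  (2 `^ x * tau_eff_inv x (Delta x)) @[x --> +oo] --> Num.sqrt 5.
Proof.
move=> c2 hc.
have c0 : 0 < c by lra.
have hD : (2 `^ x * Delta x) @[x --> +oo] --> 0.
  have e : (fun x => 2 `^ x * Delta x) = (fun x => (2 `^ x * c `^ (- (x - 0))) * (c `^ x * Delta x)).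
    apply/funext => x; rewrite subr0 powRN; field.
    by rewrite gt_eqF // powR_gt0.
  rewrite e -(mul0r k); apply: cvgM => //; apply: key_lim; lra.
have := tau_lim2 Delta 0 hD.
by rewrite (_ : ((0 - 3) ^+ 2 + 1) / 2 = 5 :> R) //; field.
Qed.

Lemma part_exp : ((2 : R) `^ x * tau_eff_inv x (expR (2 - x))) @[x --> +oo] --> Num.sqrt 5.
Proof.
have l2 : ln (2 : R) < 1.
  rewrite -ltr_expR lnK ?posrE //.
  have := @expR_gt1Dx R 1 (oner_neq0 _); lra.
have hD : (2 `^ x * expR (2 - x)) @[x --> +oo] --> (0 : R).
  have e : (fun x => (2 : R) `^ x * expR (2 - x)) = (fun x => expR 2 * expR (- (x * (1 - ln 2)))).
    apply/funext => x; rewrite /powR gt_eqF // -!expRD; congr expR; ring.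
  rewrite e -(mulr0 (expR 2)); apply: cvgMl_tmp; apply: expR_lin; lra.
have := tau_lim2 (fun x => expR (2 - x)) 0 hD.
by rewrite (_ : ((0 - 3) ^+ 2 + 1) / 2 = 5 :> R) //; field.
Qed.

Lemma part_star : ((2 : R) `^ x * tau_eff_inv x (- Bcoef x / Acoef x)) @[x --> +oo] --> 1 / Num.sqrt 2.
Proof.
have hD : (2 `^ x * (- Bcoef x / Acoef x)) @[x --> +oo] --> (3 : R).
  have e : (fun x => (2 : R) `^ x * (- Bcoef x / Acoef x)) = (fun x => (- (2 `^ x * Bcoef x)) * (Acoef x)^-1).
    by apply/funext => x; ring.
  rewrite e (_ : (3 : R) = (- (-12)) * 4^-1); last by field.
  apply: cvgM; first exact: (cvgN (B_lim R)).
  by apply: cvgV; [rewrite pnatr_eq0|exact: A_lim].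
have := tau_lim2 (fun x => - Bcoef x / Acoef x) 3 hD.
rewrite (_ : ((3 - 3) ^+ 2 + 1) / 2 = 2^-1 :> R); last by field.
by rewrite sqrtrV // div1r.
Qed.


Lemma part1 (c k : R) (Delta : R -> R) : 1 < c -> c < 2 -> k != 0 ->
  (c `^ x * Delta x) @[x --> +oo] --> k ->
  (tau_eff_inv x (Delta x) / (`|Delta x| / Num.sqrt 2)) @[x --> +oo] --> (1 : R).
Proof.
move=> c1 c2 k0 hc.
have c0 : 0 < c by lra.
pose w x := c `^ x * Delta x.
pose rho x := c `^ x * 2 `^ (- (x - 0)).
have hrho : rho x @[x --> +oo] --> 0 by apply: key_lim; lra.
pose H x := 2^-1 * Num.sqrt (2 * (Acoef x + 2 * ((2 `^ x * Bcoef x) * rho x / w x) +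
   ((2 `^ x) ^+ 2 * Ccoef x) * rho x ^+ 2 / w x ^+ 2) / Sx x).
have hn : \forall x \near +oo, H x = tau_eff_inv x (Delta x) / (`|Delta x| / Num.sqrt 2).
  near=> x.
  have wx : c `^ x * Delta x != 0 by near: x; exact: (cvgr_neq0 _ hc k0).
  have d0 : Delta x != 0 by move: wx; rewrite mulf_eq0 negb_or => /andP[].
  have t0 : (2 : R) `^ x != 0 by rewrite gt_eqF // powR_gt0.
  have tc : c `^ x != 0 by rewrite gt_eqF // powR_gt0.
  have E1 : Acoef x + 2 * ((2 `^ x * Bcoef x) * rho x / w x) + ((2 `^ x) ^+ 2 * Ccoef x) * rho x ^+ 2 / w x ^+ 2
      = (Acoef x * Delta x ^+ 2 + 2 * Bcoef x * Delta x + Ccoef x) / Delta x ^+ 2.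
    rewrite /rho /w subr0 powRN; field.
    by rewrite t0 tc d0.
  have E2 : tau_eff_inv x (Delta x) / (`|Delta x| / Num.sqrt 2) =
      2^-1 * Num.sqrt (2 * ((Acoef x * Delta x ^+ 2 + 2 * Bcoef x * Delta x + Ccoef x) / Sx x) / Delta x ^+ 2).
    by rewrite /tau_eff_inv invf_div -(mulrA (2^-1)) sqrt_div_abs.
  rewrite E2 /H E1; congr (_ * Num.sqrt _); by rewrite /Sx; ring.
apply: cvg_trans (near_eq_cvg hn) _.
have hA := A_lim R; have hB := B_lim R; have hC := C_lim R; have hS := S_lim R.
have hG : (2 * (Acoef x + 2 * ((2 `^ x * Bcoef x) * rho x / w x) +
   ((2 `^ x) ^+ 2 * Ccoef x) * rho x ^+ 2 / w x ^+ 2) / Sx x) @[x --> +oo] -->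
   (2 * (4 + 2 * ((-12) * 0 / k) + 40 * 0 ^+ 2 / k ^+ 2) / 2 : R).
  apply: cvgM; last by apply: cvgV; [rewrite pnatr_eq0|exact: hS].
  apply: cvgMl_tmp; apply: cvgD; first apply: cvgD => //.
  - apply: cvgMl_tmp; apply: cvgM; first exact: cvgM.
    by apply: cvgV.
  - apply: cvgM; first by apply: cvgM => //; exact: cvgX2.
    by apply: cvgV; [rewrite expf_neq0|exact: cvgX2].
have e : (2 * (4 + 2 * ((-12) * 0 / k) + 40 * 0 ^+ 2 / k ^+ 2) / 2 : R) = 4 by field.
rewrite e in hG.
rewrite (_ : (1 : R) = 2^-1 * Num.sqrt 4); last by rewrite sqrt4 mulVf.
apply: cvgMl_tmp.
exact: (continuous_cvg _ (@sqrt_continuous R _) hG).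
Unshelve. all: end_near.
Qed.

End Final.


Theorem mainTheorem4 (R : realType) :
  (* (i) *)
  (forall (c k : R) (Delta : R -> R),
      1 < c -> c < 2 -> k != 0 ->
      (c `^ alpha * Delta alpha) @[alpha --> +oo] --> k ->
      (tau_eff_inv alpha (Delta alpha) / (`|Delta alpha| / Num.sqrt 2))
        @[alpha --> +oo] --> (1 : R)) /\
  (* (ii) *)
  (forall (k : R) (Delta : R -> R),
      (2 `^ alpha * Delta alpha) @[alpha --> +oo] --> k ->
      (2 `^ alpha * tau_eff_inv alpha (Delta alpha))
        @[alpha --> +oo] --> Num.sqrt (((k - 3) ^+ 2 + 1) / 2)) /\
  (* (iii) *)
  (forall (c k : R) (Delta : R -> R),
      2 < c ->
      (c `^ alpha * Delta alpha) @[alpha --> +oo] --> k ->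
      (2 `^ alpha * tau_eff_inv alpha (Delta alpha))
        @[alpha --> +oo] --> Num.sqrt 5) /\
  (* in particular *)
  (((2 : R) `^ alpha * tau_eff_inv alpha (- Bcoef alpha / Acoef alpha))
     @[alpha --> +oo] --> 1 / Num.sqrt 2) /\
  (((2 : R) `^ alpha * tau_eff_inv alpha (expR (2 - alpha)))
     @[alpha --> +oo] --> Num.sqrt 5).
Proof.
split; first by move=> c k Delta c1 c2 k0 hc; exact: (@part1 R c k Delta c1 c2 k0 hc).
split; first by move=> k Delta hD; exact: (@tau_lim2 R Delta k hD).
split; first by move=> c k Delta c2 hc; exact: (@part3 R c k Delta c2 hc).
split; [exact: (@part_star R)|exact: (@part_exp R)].
Qed.
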